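(* Let $G=(V,E)$ be a claw-free graph and $I$ a maximum cardinality independent set of $G$. For any $a,b\in I$ with $a\ne b$ we have $N(\mathtt{T1}^a_b)\cap V_b=\mathtt{T1}^b_a$ and $N(\mathtt{T2}^a)\cap V_b\subseteq\mathtt{T2}^b$.
   Context: Graphs are finite, simple, undirected; claw-free means no induced $K_{1,3}$. For a set $X$ of vertices, $N(X)=\bigcup_{x\in X}N[x]\setminus X$. For $a\in I$, the $1$-pack $V_a$ is $\{v\in V\setminus I : N(v)\cap I=\{a\}\}$. Each $V_a$ is partitioned according to neighbourhoods in the union of all $1$-packs: $\mathtt{T0}^a$ consists of $v\in V_a$ with no neighbour in any $1$-pack other than $V_a$; for $b\in I\setminus\{a\}$, $\mathtt{T1}^a_b$ consists of $v\in V_a$ that have a neighbour in $V_b$ and no neighbour in any $1$-pack other than $V_a$ and $V_b$; $\mathtt{T2}^a$ consists of $v\in V_a$ having neighbours in at least two distinct $1$-packs other than $V_a$. *)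

(* Defs.v *)
From mathcomp Require Import all_boot.
Set Implicit Arguments. Unset Strict Implicit. Unset Printing Implicit Defensive.

Definition simple_graph (T : finType) (e : rel T) : Prop :=
  symmetric e /\ irreflexive e.

Definition nbh (T : finType) (e : rel T) (v : T) : {set T} := [set u | e v u].
Definition cnbh (T : finType) (e : rel T) (v : T) : {set T} := v |: nbh e v.

Definition nbhS (T : finType) (e : rel T) (X : {set T}) : {set T} :=
  (\bigcup_(x in X) cnbh e x) :\: X.

Definition claw_free (T : finType) (e : rel T) : Prop :=
  forall c x y z : T, e c x -> e c y -> e c z ->
    x != y -> y != z -> x != z ->
    ~~ e x y -> ~~ e y z -> ~~ e x z -> False.

Definition independent (T : finType) (e : rel T) (S : {set T}) : bool :=
  [forall x in S, forall y in S, ~~ e x y].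

Definition max_independent (T : finType) (e : rel T) (I : {set T}) : Prop :=
  independent e I /\ forall S : {set T}, independent e S -> #|S| <= #|I|.

(* the 1-pack V_a *)
Definition pack1 (T : finType) (e : rel T) (I : {set T}) (a : T) : {set T} :=
  [set v in ~: I | nbh e v :&: I == [set a]].

Definition adj_pack (T : finType) (e : rel T) (I : {set T}) (v c : T) : bool :=
  [exists u in pack1 e I c, e v u].

Definition T0 (T : finType) (e : rel T) (I : {set T}) (a : T) : {set T} :=
  [set v in pack1 e I a | [forall c in I, (c != a) ==> ~~ adj_pack e I v c]].

Definition T1 (T : finType) (e : rel T) (I : {set T}) (a b : T) : {set T} :=
  [set v in pack1 e I a | adj_pack e I v b &&
     [forall c in I, ((c != a) && (c != b)) ==> ~~ adj_pack e I v c]].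

Definition T2 (T : finType) (e : rel T) (I : {set T}) (a : T) : {set T} :=
  [set v in pack1 e I a | [exists c in I, exists d in I,
     [&& c != a, d != a, c != d, adj_pack e I v c & adj_pack e I v d]]].

(* Main.v *)
Require Import Defs.
From mathcomp Require Import all_boot.
Set Implicit Arguments. Unset Strict Implicit.

Section S.
Variables (T : finType) (e : rel T) (I : {set T}).
Hypothesis sym : symmetric e.
Hypothesis cf : claw_free e.

Lemma packI v c : v \in pack1 e I c -> v \notin I /\ forall x, x \in I -> e v x = (x == c).
Proof.
rewrite inE => /andP [vI /eqP H]; split; first by rewrite inE in vI.
move=> x xI; move/setP/(_ x): H; rewrite !inE xI andbT => ->.
by [].
Qed.

Lemma pack_in v c : v \in pack1 e I c -> c \in I.
Proof.
rewrite inE => /andP [_ /eqP /setP /(_ c)].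
by rewrite !inE eqxx => /andP [].
Qed.

Lemma pack_uniq v c d : v \in pack1 e I c -> v \in pack1 e I d -> c = d.
Proof.
move=> Hc Hd; have [_ H] := packI Hc; have cI := pack_in Hc.
have [_ H'] := packI Hd. by apply/eqP; rewrite -H' // H.
Qed.

Lemma clawpack u x w a b c : u \in pack1 e I a -> x \in pack1 e I b ->
  w \in pack1 e I c -> b != a -> c != a -> b != c -> e u x -> e u w -> e x w.
Proof.
move=> ua xb wc ba ca bc eux euw.
case: (boolP (e x w)) => // nxw; exfalso.
have aI := pack_in ua. have [uI Hu] := packI ua.
have [xI Hx] := packI xb. have [wI Hw] := packI wc.
apply: (cf (c:=u) (x:=a) (y:=x) (z:=w)) => //.
- by rewrite Hu // eqxx.
- by apply/eqP => E; rewrite -E aI in xI.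
- by apply/eqP => E; rewrite E in xb; move: bc; rewrite (pack_uniq xb wc) eqxx.
- by apply/eqP => E; rewrite -E aI in wI.
- by rewrite sym Hx // eq_sym.
- by rewrite sym Hw // eq_sym.
Qed.

End S.

Theorem lemma12 (T : finType) (e : rel T) (I : {set T}) (a b : T) :
  simple_graph e -> claw_free e -> max_independent e I ->
  a \in I -> b \in I -> a != b ->
  nbhS e (T1 e I a b) :&: pack1 e I b = T1 e I b a /\
  nbhS e (T2 e I a) :&: pack1 e I b \subset T2 e I b.
Proof.
move=> [sym irr] cf _ aI bI ab.
have nbhSP : forall X v, v \in nbhS e X -> exists2 x, x \in X & e x v.
  move=> X v; rewrite /nbhS in_setD => /andP [vX /bigcupP [x xX]].
  rewrite /cnbh in_setU1 /nbh inE => /orP [/eqP E|]; last by exists x.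
  by rewrite E xX in vX.
split.
- apply/setP => v; apply/idP/idP.
  + rewrite inE => /andP [/nbhSP [u] uT euv vb].
    move: uT; rewrite inE => /andP [ua /andP [_ /forallP Hu]].
    rewrite inE vb /=; apply/andP; split.
      by apply/existsP; exists u; rewrite ua sym.
    apply/forallP => c; apply/implyP => cI; apply/implyP => /andP [cb ca].
    apply/negP => /existsP [w /andP [wc evw]].
    have := Hu c; rewrite cI /= ca cb /= => /negP; apply.
    apply/existsP; exists w; rewrite wc /=.
    apply: (clawpack sym cf vb ua wc) => //; rewrite 1?eq_sym //. by rewrite sym.
  + move=> vT; move: (vT); rewrite inE => /andP [vb /andP [/existsP [u /andP [ua evu]] /forallP Hv]].
    rewrite inE vb andbT /nbhS in_setD; apply/andP; split.
      apply/negP; rewrite inE => /andP [va _].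
      by move: ab; rewrite (pack_uniq vb va) eqxx.
    apply/bigcupP; exists u; last by rewrite /cnbh in_setU1 /nbh inE sym evu orbT.
    rewrite inE ua /=; apply/andP; split.
      by apply/existsP; exists v; rewrite vb sym.
    apply/forallP => c; apply/implyP => cI; apply/implyP => /andP [ca cb].
    apply/negP => /existsP [w /andP [wc euw]].
    have := Hv c; rewrite cI /= ca cb /= => /negP; apply.
    apply/existsP; exists w; rewrite wc /=.
    apply: (clawpack sym cf ua vb wc) => //; rewrite 1?eq_sym // 1?sym //.

- apply/subsetP => v; rewrite inE => /andP [/nbhSP [u] uT euv vb].
  move: uT; rewrite inE => /andP [ua /existsP [c /andP [cI /existsP [d /andP [dI]]]]].
  case/and5P => ca da cd /existsP [wc /andP [wcc euwc]] /existsP [wd /andP [wdd euwd]].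
  (* pick x in {c,d} different from b *)
  have [x [w [xI xa xb wx euw]]] : exists x w, [/\ x \in I, x != a, x != b,
      w \in pack1 e I x & e u w].
    case: (eqVneq c b) => [cb|cb]; last by exists c, wc.
    exists d, wd; split => //; apply/eqP => E; move: cd; by rewrite cb E eqxx.
  rewrite inE vb /=; apply/existsP; exists a; rewrite aI /=.
  apply/existsP; exists x; rewrite xI /= ab xb (eq_sym a x) xa /=.
  apply/andP; split; apply/existsP.
    by exists u; rewrite ua sym.
  exists w; rewrite wx /=.
  apply: (clawpack sym cf ua vb wx) => //; rewrite 1?eq_sym // 1?sym //.
Qed.
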